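(* Let $p\in(0,1)$ and let $(\lambda_n)_{n\ge1}$ be a sequence with $\lambda_1=1$ and $0\le\lambda_n\le\lambda_{n-1}$ for all $n>1$. Let $r_1,r_2,\dots$ be $\{0,1\}$-valued random variables with $\Pr(r_1=1)=p$ and, for every $n\ge2$, $\Pr(r_n=1\mid r_1,\dots,r_{n-1})=\lambda_n p+(1-\lambda_n)\bar p_{n-1}$, where $\bar p_m=\frac1m\sum_{i=1}^m r_i$. Then for every $n\ge2$, $\mathrm{Cov}[\bar p_{n-1},r_n]=(1-\lambda_n)\,\mathrm{Var}[\bar p_{n-1}]$. *)

(* Defs.v *)
From HB Require Import structures.
From mathcomp Require Import all_boot all_order all_algebra.
From mathcomp Require Import all_classical all_reals all_analysis.
Set Implicit Arguments. Unset Strict Implicit. Unset Printing Implicit Defensive.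
Import Order.TTheory GRing.Theory Num.Theory.
Local Open Scope classical_set_scope.
Local Open Scope ring_scope.

(* Random variables are indexed from 1: r 1, r 2, ... ; r 0 is unused. *)

Definition pbar {T : Type} {R : realType} (r : nat -> T -> R) (m : nat) : T -> R :=
  fun t => m%:R^-1 * \sum_(1 <= i < m.+1) r i t.

Definition hist_event {T : Type} {R : realType} (r : nat -> T -> R)
    (m : nat) (b : nat -> bool) : set T :=
  [set t | forall i, (1 <= i <= m)%N -> r i t = (b i)%:R].

Definition bmean {R : realType} (m : nat) (b : nat -> bool) : R :=
  m%:R^-1 * \sum_(1 <= i < m.+1) ((b i)%:R : R).

(* Main.v *)
Require Import Defs.
From HB Require Import structures.
From mathcomp Require Import all_boot all_order all_algebra.
From mathcomp Require Import all_classical all_reals all_analysis.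
From mathcomp Require Import ring.
Import Order.TTheory GRing.Theory Num.Theory.
Local Open Scope classical_set_scope.
Local Open Scope ring_scope.
Section Decomp.
Context (d : measure_display) (T : measurableType d) (R : realType)
  (P : probability T R) (r : nat -> T -> R) (m : nat).
Hypothesis mr : forall i, measurable_fun setT (r i).
Hypothesis r01 : forall i t, r i t = 0 \/ r i t = 1.

Definition bits (t : T) : nat -> bool := fun i => r i t == 1.
Definition bt (s : m.-tuple bool) : nat -> bool := fun i => nth false s i.-1.
Definition tupt (t : T) : m.-tuple bool := [tuple r (val i).+1 t == 1 | i < m].

Lemma hist_measurable k b : measurable (hist_event r k b).
Proof.
elim: k => [|k IH].
  rewrite (_ : hist_event r 0 b = setT) //.
  by apply/seteqP; split => t // _ i /andP[/leq_trans H /H].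
rewrite (_ : hist_event r k.+1 b = hist_event r k b `&` (setT `&` r k.+1 @^-1` [set (b k.+1)%:R])).
  apply: measurableI => //; apply: mr => //; exact: measurable_set1.
apply/seteqP; split => t.
  move=> H; split; last by split => //; apply: H; rewrite /= leqnn.
  by move=> i /andP[i1 ik]; apply: H; rewrite i1 /= ltnW.
move=> [H [_ /= H2]] i /andP[i1]; rewrite leq_eqVlt => /orP[/eqP -> //|ik].
by apply: H; rewrite i1.
Qed.

Lemma hist_memP t s :
  t \in hist_event r m (bt s) <-> s = tupt t.
Proof.
rewrite inE; split.
  move=> H; apply: eq_from_tnth => j; rewrite tnth_mktuple.
  have := H j.+1; rewrite /= ltn_ord => /(_ isT); rewrite /bt /= -tnth_nth.
  by case: (tnth s j) => ->; rewrite ?eqxx // eq_sym oner_eq0.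
move=> -> i /andP[i1 im]; rewrite /bt.
have im' : (i.-1 < m)%N by rewrite prednK.
have -> : nth false (tupt t) i.-1 = tnth (tupt t) (Ordinal im') by rewrite (tnth_nth false).
rewrite tnth_mktuple /= prednK //.
by case: (r01 i t) => ->; rewrite ?eqxx // eq_sym oner_eq0.
Qed.

Lemma pt_decomp (F : (nat -> bool) -> R) (A : set T) t :
  (forall b b', (forall i, (1 <= i <= m)%N -> b i = b' i) -> F b = F b') ->
  F (bits t) * \1_A t =
  \sum_(s : m.-tuple bool) F (bt s) * \1_(hist_event r m (bt s) `&` A) t.
Proof.
move=> HF.
rewrite (bigD1 (tupt t)) //= big1 ?addr0.
  rewrite !indicE in_setI.
  have -> : t \in hist_event r m (bt (tupt t)) by apply/hist_memP.
  congr (_ * _); apply: HF => i /andP[i1 im].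
  rewrite /bt /bits.
  have im' : (i.-1 < m)%N by rewrite prednK.
  have -> : nth false (tupt t) i.-1 = tnth (tupt t) (Ordinal im') by rewrite (tnth_nth false).
  by rewrite tnth_mktuple /= prednK.
move=> s /eqP sne; rewrite indicE in_setI.
have -> : (t \in hist_event r m (bt s)) = false.
  by apply/negP => /hist_memP.
by rewrite /= mulr0.
Qed.


Lemma decomp_integrable (F : (nat -> bool) -> R) (A : set T) : measurable A ->
  (forall b b', (forall i, (1 <= i <= m)%N -> b i = b' i) -> F b = F b') ->
  P.-integrable setT (EFin \o (fun t => F (bits t) * \1_A t)).
Proof.
move=> mA HF.
have H : P.-integrable setT (fun t => \sum_(s : m.-tuple bool)
   (F (bt s))%:E * (\1_(hist_event r m (bt s) `&` A) t)%:E)%E.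
  apply: (integrable_sum measurableT) => s _; apply: (integrableZl measurableT).
  apply: integrable_indic; apply: measurableI => //; exact: hist_measurable.
apply: (eq_integrable measurableT _ _ _ H) => t _ /=; rewrite (pt_decomp _ _ _ HF) -sumEFin.
by apply: eq_bigr => s _; rewrite EFinM.
Qed.

Lemma decomp_expect (F : (nat -> bool) -> R) (A : set T) : measurable A ->
  (forall b b', (forall i, (1 <= i <= m)%N -> b i = b' i) -> F b = F b') ->
  expectation P (fun t => F (bits t) * \1_A t) =
  (\sum_(s : m.-tuple bool) (F (bt s))%:E * P (hist_event r m (bt s) `&` A))%E.
Proof.
move=> mA HF; rewrite unlock.
under eq_integral => t _ do rewrite (pt_decomp _ _ _ HF) -sumEFin.
rewrite integral_sum //.
  apply: eq_bigr => s _.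
  under eq_integral => t _ do rewrite EFinM.
  rewrite integralZl //; last first.
    apply: integrable_indic; apply: measurableI => //; exact: hist_measurable.
  rewrite integral_indic ?setIT //.
  apply: measurableI => //; exact: hist_measurable.
move=> s; under eq_fun => t do rewrite EFinM.
apply: integrableZl => //.
apply: integrable_indic; apply: measurableI => //; exact: hist_measurable.
Qed.
End Decomp.

Theorem lemmaA3 (d : measure_display) (T : measurableType d) (R : realType)
  (P : probability T R) (p : R) (lam : nat -> R) (r : nat -> T -> R) :
  0 < p < 1 ->
  lam 1%N = 1 ->
  (forall n, (1 < n)%N -> 0 <= lam n <= lam n.-1) ->
  (forall i, measurable_fun setT (r i)) ->
  (forall i t, r i t = 0 \/ r i t = 1) ->
  P [set t | r 1%N t = 1] = p%:E ->
  (forall (n : nat) (b : nat -> bool), (2 <= n)%N ->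
     P (hist_event r n.-1 b `&` [set t | r n t = 1]) =
       ((lam n * p + (1 - lam n) * bmean n.-1 b)%:E * P (hist_event r n.-1 b))%E) ->
  forall n : nat, (2 <= n)%N ->
    covariance P (pbar r n.-1) (r n) = ((1 - lam n)%:E * variance P (pbar r n.-1))%E.
Proof.
move=> _ _ _ mr r01 _ Hcond n n2.
set m := n.-1.
set A1 := [set t | r n t = 1].
have mA1 : measurable A1.
  by have := mr n measurableT _ (measurable_set1 1); rewrite setTI.
have rb i t : r i t = (r i t == 1)%:R.
  by case: (r01 i t) => ->; rewrite ?eqxx // eq_sym oner_eq0.
pose bm := fun b : nat -> bool => (bmean m b : R).
have Hbm : forall b b', (forall i, (1 <= i <= m)%N -> b i = b' i) -> bm b = bm b'.
  move=> b b' Hb; rewrite /bm /bmean; congr (_ * _).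
  by apply: eq_big_nat => i /andP[i1 im]; rewrite Hb // i1 -ltnS.
have Hbm2 : forall b b', (forall i, (1 <= i <= m)%N -> b i = b' i) -> bm b ^+ 2 = bm b' ^+ 2.
  by move=> b b' Hb; rewrite (Hbm b b').
have H1 : forall b b' : nat -> bool, (forall i, (1 <= i <= m)%N -> b i = b' i) ->
   (fun _ => 1 : R) b = (fun _ => 1 : R) b' by [].
have hX : pbar r m = fun t => bm (bits _ _ _ r t) * \1_setT t.
  apply/funext => t; rewrite indicE in_setT mulr1 /pbar /bm /bmean.
  by congr (_ * _); apply: eq_bigr => i _; rewrite [LHS]rb.
have hY : r n = fun t => (fun _ => 1 : R) (bits _ _ _ r t) * \1_A1 t.
  apply/funext => t; rewrite indicE mul1r [LHS]rb; congr (_%:R).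
  congr (nat_of_bool _).
  have [H|H] := eqVneq (r n t) 1; first by rewrite mem_set.
  by apply/esym/negP => /set_mem /eqP; rewrite (negbTE H).
have hXY : (pbar r m * r n)%R = fun t => bm (bits _ _ _ r t) * \1_A1 t.
  apply/funext => t; change (pbar r m t * r n t = bm (bits _ _ _ r t) * \1_A1 t); rewrite hX hY /= indicE in_setT mulr1 mul1r //.
have hXX : (pbar r m * pbar r m)%R = fun t => bm (bits _ _ _ r t) ^+ 2 * \1_setT t.
  apply/funext => t; change (pbar r m t * pbar r m t = bm (bits _ _ _ r t) ^+ 2 * \1_setT t); rewrite hX /= indicE in_setT !mulr1 expr2 //.
have h1 : (cst 1 : T -> R) = fun t => (fun _ => 1 : R) (bits _ _ _ r t) * \1_setT t.
  by apply/funext => t; rewrite indicE in_setT mulr1.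
have L1 F A : measurable A ->
    (forall b b', (forall i, (1 <= i <= m)%N -> b i = b' i) -> F b = F b') ->
    (fun t => F (bits _ _ _ r t) * \1_A t) \in Lfun P 1.
  by move=> mA HF; apply: (proj2 (Lfun1_integrable P _)); exact: (decomp_integrable _ _ _ P r m mr r01).
have LX : pbar r m \in Lfun P 1 by rewrite hX; exact: (L1 bm _ measurableT Hbm).
have LY : r n \in Lfun P 1 by rewrite hY; exact: (L1 (fun _ => 1) _ mA1 H1).
have LXY : (pbar r m * r n)%R \in Lfun P 1 by rewrite hXY; exact: (L1 bm _ mA1 Hbm).
have LXX : (pbar r m * pbar r m)%R \in Lfun P 1 by rewrite hXX; exact: (L1 (fun b => bm b ^+ 2) _ measurableT Hbm2).
rewrite /variance !covarianceE //.
have DE := decomp_expect _ _ _ P r m mr r01.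
set q := fun s : m.-tuple bool => fine (P (hist_event r m (bt m s))).
have Pq s : P (hist_event r m (bt m s)) = (q s)%:E.
  by rewrite fineK // fin_num_measure //; exact: (hist_measurable _ _ _ r mr).
have PA s : P (hist_event r m (bt m s) `&` A1) =
    ((lam n * p + (1 - lam n) * bm (bt m s)) * q s)%:E.
  by rewrite Hcond // Pq EFinM.
have E0 : \sum_(s : m.-tuple bool) q s = 1.
  have := DE (fun _ => 1) _ measurableT H1.
  rewrite -h1 expectation_cst.
  under eq_bigr => s _ do rewrite setIT Pq mul1e.
  by rewrite sumEFin => -[].
have EX : expectation P (pbar r m) = (\sum_(s : m.-tuple bool) bm (bt m s) * q s)%:E.
  rewrite hX (DE _ _ measurableT Hbm) -sumEFin.
  by apply: eq_bigr => s _; rewrite setIT Pq EFinM.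
have EXX : expectation P (pbar r m * pbar r m) = (\sum_(s : m.-tuple bool) bm (bt m s) ^+ 2 * q s)%:E.
  rewrite hXX (DE _ _ measurableT Hbm2) -sumEFin.
  by apply: eq_bigr => s _; rewrite setIT Pq EFinM.
have EXY : expectation P (pbar r m * r n) = (\sum_(s : m.-tuple bool)
     bm (bt m s) * ((lam n * p + (1 - lam n) * bm (bt m s)) * q s))%:E.
  rewrite hXY (DE _ _ mA1 Hbm) -sumEFin.
  by apply: eq_bigr => s _; rewrite PA EFinM.
have EY : expectation P (r n) = (\sum_(s : m.-tuple bool)
     ((lam n * p + (1 - lam n) * bm (bt m s)) * q s))%:E.
  rewrite hY (DE (fun _ => 1) _ mA1 H1) -sumEFin.
  by apply: eq_bigr => s _; rewrite PA mul1e.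
rewrite EX EXX EXY EY -!EFinM -!EFinB; congr EFin.
set S1 := \sum_(s : m.-tuple bool) bm (bt m s) * q s.
set S2 := \sum_(s : m.-tuple bool) bm (bt m s) ^+ 2 * q s.
have -> : \sum_(s : m.-tuple bool) bm (bt m s) * ((lam n * p + (1 - lam n) * bm (bt m s)) * q s)
   = lam n * p * S1 + (1 - lam n) * S2.
  rewrite /S1 /S2 !mulr_sumr -big_split /=; apply: eq_bigr => s _; ring.
have -> : \sum_(s : m.-tuple bool) ((lam n * p + (1 - lam n) * bm (bt m s)) * q s)
   = lam n * p * (\sum_(s : m.-tuple bool) q s) + (1 - lam n) * S1.
  rewrite /S1 !mulr_sumr -big_split /=; apply: eq_bigr => s _; ring.
rewrite E0; ring.
Qed.
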